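(* Let $V\in(\mathbb{R}\cup\{-\infty\})^{n\times p}$ have no row and no column identically $-\infty$, and suppose each column of $V$ has at least two finite entries. Consider the game $\Gamma$ defined below. The following are equivalent: (1) there are disjoint dominions for the two players in $\Gamma$; (2) there exist nonempty subsets $I,J\subset[n]$ with $I\cup J=[n]$, $I\cap J=\emptyset$, such that some columns of $V$ have support included in $I$, and the other columns of $V$ have at least two finite entries in $J$; (3) there exists $K\subset[p]$ with $K\neq\emptyset$, $K\neq[p]$, such that, denoting by $I_K$ the union of the supports of the columns of $V$ indexed by $K$, every column not in $K$ has at least two finite entries outside $I_K$. Moreover, in case (3), $I_K$ and $[n]\setminus I_K$ are disjoint dominions of players Min and Max respectively.
   Context: Support of a column: set of indices of its finite entries. Let $E=\{(i,k):V_{ik}\neq-\infty\}$. The game $\Gamma$ is a repeated two-player game with states $[n]$: at state $i$, player Min chooses a column $k$ with $(i,k)\in E$, then player Max chooses $j\in[n]$ with $j\neq i$ and $(j,k)\in E$, and the game moves to state $j$ (Min pays $-V_{ik}$ and then $V_{jk}$ to Max; payments are irrelevant here). A dominion of a player is a nonempty set $I\subset[n]$ such that this player has a policy ensuring that, from any initial state in $I$ and whatever the other player does, all states visited (at Min's turns) remain in $I$. *)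

(* Defs.v *)
(* Entries of V live in R ∪ {-oo}, encoded as option R
   with None = -oo and Some x = the finite real x. *)
From mathcomp Require Import all_boot all_order all_algebra.
From mathcomp Require Import reals.
Set Implicit Arguments. Unset Strict Implicit. Unset Printing Implicit Defensive.

Section Game.
Variables (R : realType) (n p : nat) (V : 'M[option R]_(n, p)).

Definition finite_entry (i : 'I_n) (k : 'I_p) : bool := V i k != None.

Definition supp (k : 'I_p) : {set 'I_n} := [set i | finite_entry i k].

(* A (stationary) policy of Min: at state i choose column sigma i.
   A play consistent with sigma: a sequence of states s_0, s_1, ... where
   s_{t+1} is an admissible move of Max after Min plays sigma (s_t). *)
Definition min_play (sigma : 'I_n -> 'I_p) (s : nat -> 'I_n) : Prop :=
  forall t, s t.+1 != s t /\ finite_entry (s t.+1) (sigma (s t)).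

Definition min_dominion (I : {set 'I_n}) : Prop :=
  I != set0 /\
  exists sigma : 'I_n -> 'I_p,
    (forall i, i \in I -> finite_entry i (sigma i)) /\
    (forall s, min_play sigma s -> s 0 \in I -> forall t, s t \in I).

(* A (stationary) policy of Max: at state i, after Min chose column k,
   move to tau i k.  A play consistent with tau: Min chooses admissible
   columns k_t arbitrarily. *)
Definition max_play (tau : 'I_n -> 'I_p -> 'I_n) (s : nat -> 'I_n) : Prop :=
  exists c : nat -> 'I_p,
    forall t, finite_entry (s t) (c t) /\ s t.+1 = tau (s t) (c t).

Definition max_dominion (J : {set 'I_n}) : Prop :=
  J != set0 /\
  exists tau : 'I_n -> 'I_p -> 'I_n,
    (forall i k, i \in J -> finite_entry i k ->
       tau i k != i /\ finite_entry (tau i k) k) /\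
    (forall s, max_play tau s -> s 0 \in J -> forall t, s t \in J).

Definition I_of (K : {set 'I_p}) : {set 'I_n} := \bigcup_(k in K) supp k.

End Game.

(* Main.v *)
Require Import Defs.
From mathcomp Require Import all_boot all_order all_algebra.
From mathcomp Require Import reals.
Set Implicit Arguments. Unset Strict Implicit. Unset Printing Implicit Defensive.

Lemma suppE (R : realType) n p (V : 'M[option R]_(n, p)) i k :
  (i \in supp V k) = finite_entry V i k.
Proof. by rewrite inE. Qed.

Lemma two_elems (T : finType) (A : {set T}) (x : T) :
  2 <= #|A| -> exists y, y \in A /\ y != x.
Proof.
move=> H; have : 0 < #|A :\ x|.
  by move: H; rewrite (cardsD1 x A); case: (x \in A) => /=; [rewrite ltnS|move=> /ltnW].
rewrite card_gt0 => /set0Pn [y]; rewrite !inE => /andP [Hy1 Hy2].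
by exists y.
Qed.

Lemma min_nec (R : realType) n p (V : 'M[option R]_(n, p))
  (cols_two : forall k : 'I_p, 2 <= #|supp V k|) I :
  min_dominion V I -> exists sigma : 'I_n -> 'I_p, forall i, i \in I ->
    i \in supp V (sigma i) /\ supp V (sigma i) \subset I.
Proof.
move=> [_ [sig [Hf Hp]]]; exists sig => i Hi; split; first by rewrite suppE Hf.
apply/subsetP => j Hj; case: (eqVneq j i) => [->//|ji].
pose nx x := odflt x [pick y in supp V (sig x) :\ x].
have Hnx : forall x, nx x != x /\ finite_entry V (nx x) (sig x).
  move=> x; rewrite /nx; case: pickP => [y|] /=.
    by rewrite !inE => /andP [-> ->].
  have [y [Hy1 Hy2]] := two_elems x (cols_two (sig x)).
  by move=> /(_ y); rewrite in_setD1 Hy1 Hy2.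
pose s t := if t is t'.+1 then iter t' nx j else i.
have Hs : min_play V sig s.
  case=> [|t] /=; first by rewrite ji -suppE.
  exact: Hnx.
exact: (Hp s Hs Hi 1).
Qed.

Fixpoint mplay n (g : nat -> 'I_n -> 'I_n) (i0 : 'I_n) t :=
  if t is t'.+1 then g t' (mplay g i0 t') else i0.

Lemma max_nec (R : realType) n p (V : 'M[option R]_(n, p))
  (rows_ok : forall i : 'I_n, exists k : 'I_p, finite_entry V i k) J :
  max_dominion V J -> forall i k, i \in J -> i \in supp V k ->
    exists j, [/\ j \in J, j \in supp V k & j != i].
Proof.
move=> [_ [tau [Ht Hp]]] i k Hi Hk; rewrite suppE in Hk.
have [T1 T2] := Ht i k Hi Hk.
exists (tau i k); split => //; last by rewrite suppE.
pose rc x := odflt k [pick k' | finite_entry V x k'].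
have Hrc : forall x, finite_entry V x (rc x).
  move=> x; rewrite /rc; case: pickP => [//|] /=.
  by have [k' Hk'] := rows_ok x => /(_ k'); rewrite Hk'.
pose f t x := if t is 0 then k else rc x.
pose g t x := tau x (f t x).
pose s := mplay g i.
have Hs : max_play V tau s.
  exists (fun t => f t (s t)) => t; split => //.
  by case: t => [|t] //=.
exact: (Hp s Hs Hi 1).
Qed.

Lemma min_suf (R : realType) n p (V : 'M[option R]_(n, p)) I :
  I != set0 -> (forall i, i \in I -> exists k, i \in supp V k /\ supp V k \subset I) ->
  min_dominion V I.
Proof.
move=> HI H; split => //.
have [i0 Hi0] := set0Pn _ HI; have [k0 _] := H i0 Hi0.
pose sig i := odflt k0 [pick k | (i \in supp V k) && (supp V k \subset I)].
have Hsig : forall i, i \in I -> i \in supp V (sig i) /\ supp V (sig i) \subset I.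
  move=> i Hi; rewrite /sig; case: pickP => [k /andP [] //|] /=.
  by have [k [Hk1 Hk2]] := H i Hi => /(_ k); rewrite Hk1 Hk2.
exists sig; split; first by move=> i /Hsig [] ; rewrite suppE.
move=> s Hs Hs0; elim=> [//|t IH].
have [_ Hs2] := Hsig _ IH; have [_ Hst] := Hs t.
by apply: (subsetP Hs2); rewrite suppE.
Qed.

Lemma max_suf (R : realType) n p (V : 'M[option R]_(n, p)) J :
  J != set0 -> (forall i k, i \in J -> i \in supp V k ->
    exists j, [/\ j \in J, j \in supp V k & j != i]) ->
  max_dominion V J.
Proof.
move=> HJ H; split => //.
pose tau i k := odflt i [pick j | (j \in J) && (j \in supp V k) && (j != i)].
have Ht : forall i k, i \in J -> i \in supp V k ->
    [/\ tau i k \in J, tau i k \in supp V k & tau i k != i].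
  move=> i k Hi Hk; rewrite /tau; case: pickP => [j /andP [/andP [-> ->] ->] //|] /=.
  by have [j [Hj1 Hj2 Hj3]] := H i k Hi Hk => /(_ j); rewrite Hj1 Hj2 Hj3.
exists tau; split.
  by move=> i k Hi Hk; rewrite -suppE in Hk; have [_ ? ?] := Ht i k Hi Hk; rewrite -suppE.
move=> s [c Hc] Hs0; elim=> [//|t IH].
have [Hc1 ->] := Hc t; rewrite -suppE in Hc1.
by have [] := Ht _ _ IH Hc1.
Qed.

Lemma IK_sub (R : realType) n p (V : 'M[option R]_(n, p)) (K : {set 'I_p}) (I : {set 'I_n}) :
  (forall k, k \in K -> supp V k \subset I) -> I_of V K \subset I.
Proof. by move=> H; apply/bigcupsP. Qed.

Lemma IK_nz (R : realType) n p (V : 'M[option R]_(n, p))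
  (cols_ok : forall k : 'I_p, exists i : 'I_n, finite_entry V i k) (K : {set 'I_p}) :
  K != set0 -> I_of V K != set0.
Proof.
move=> /set0Pn [k Hk]; have [i Hi] := cols_ok k.
apply/set0Pn; exists i; apply/bigcupP; exists k => //; by rewrite suppE.
Qed.

Lemma doms (R : realType) n p (V : 'M[option R]_(n, p))
  (cols_ok : forall k : 'I_p, exists i : 'I_n, finite_entry V i k)
  (I J : {set 'I_n}) (K : {set 'I_p}) :
  K != set0 -> J != set0 -> I :&: J = set0 ->
  (forall k, k \in K -> supp V k \subset I) ->
  (forall k, k \notin K -> 2 <= #|supp V k :&: J|) ->
  min_dominion V (I_of V K) /\ max_dominion V J.
Proof.
move=> HK HJ HIJ Hin Hout; split.
  apply: min_suf; first exact: IK_nz.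
  move=> i /bigcupP [k Hk Hik]; exists k; split => //.
  by apply/subsetP => x Hx; apply/bigcupP; exists k.
apply: max_suf => // i k Hi Hik.
have HkK : k \notin K.
  apply/negP => HkK; have : i \in I :&: J by rewrite inE (subsetP (Hin k HkK)) .
  by rewrite HIJ inE.
have [j [Hj Hji]] := two_elems i (Hout k HkK).
by move: Hj; rewrite inE => /andP [Hj1 Hj2]; exists j.
Qed.

Theorem propositionA2 (R : realType) (n p : nat) (V : 'M[option R]_(n, p))
  (rows_ok : forall i : 'I_n, exists k : 'I_p, finite_entry V i k)
  (cols_ok : forall k : 'I_p, exists i : 'I_n, finite_entry V i k)
  (cols_two : forall k : 'I_p, 2 <= #|supp V k|) :
  ((* (1) <-> (2) *)
   ((exists I J : {set 'I_n},
      [/\ min_dominion V I, max_dominion V J & I :&: J = set0]) <->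
   (exists (I J : {set 'I_n}) (K : {set 'I_p}),
      [/\ I != set0, J != set0, I :|: J = [set: 'I_n] & I :&: J = set0] /\
      [/\ K != set0,
          (forall k, k \in K -> supp V k \subset I) &
          (forall k, k \notin K -> 2 <= #|supp V k :&: J|)])) /\
   (* (2) <-> (3) *)
   ((exists (I J : {set 'I_n}) (K : {set 'I_p}),
      [/\ I != set0, J != set0, I :|: J = [set: 'I_n] & I :&: J = set0] /\
      [/\ K != set0,
          (forall k, k \in K -> supp V k \subset I) &
          (forall k, k \notin K -> 2 <= #|supp V k :&: J|)]) <->
   (exists K : {set 'I_p},
      [/\ K != set0, K != [set: 'I_p] &
          (forall k, k \notin K -> 2 <= #|supp V k :\: I_of V K|)])) /\
   (* moreover *)
   (forall K : {set 'I_p},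
      K != set0 -> K != [set: 'I_p] ->
      (forall k, k \notin K -> 2 <= #|supp V k :\: I_of V K|) ->
      min_dominion V (I_of V K) /\ max_dominion V (~: I_of V K))).
Proof.
have moreover : forall K : {set 'I_p},
      K != set0 -> K != [set: 'I_p] ->
      (forall k, k \notin K -> 2 <= #|supp V k :\: I_of V K|) ->
      ~: I_of V K != set0.
  move=> K HK HT Hout.
  have [k Hk] : exists k, k \notin K.
    apply/existsP; apply: contraR HT; rewrite negb_exists => /forallP H.
    by apply/eqP/setP => k; rewrite inE; move: (H k); rewrite negbK.
  have : 0 < #|supp V k :\: I_of V K| by apply: ltnW; exact: Hout.
  rewrite card_gt0 => /set0Pn [x Hx].
  by apply/set0Pn; exists x; rewrite in_setC; move: Hx; rewrite in_setD => /andP [].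
split; [split|split; [split|]].
- move=> [I [J [Hmin Hmax HIJ]]].
  have [sig Hsig] := min_nec cols_two Hmin.
  have Hmx := max_nec rows_ok Hmax.
  have [i0 Hi0] := set0Pn _ Hmin.1.
  have HIJ' : forall x, x \in I -> x \notin J.
    move=> x Hx; apply/negP => HxJ.
    have : x \in I :&: J by rewrite inE Hx HxJ.
    by rewrite HIJ inE.
  exists (~: J), J, [set k | [disjoint supp V k & J]]; split; split.
  + by apply/set0Pn; exists i0; rewrite inE HIJ'.
  + exact: Hmax.1.
  + by apply/setP => x; rewrite !inE; case: (x \in J).
  + by apply/setP => x; rewrite !inE; case: (x \in J).
  + apply/set0Pn; exists (sig i0); rewrite inE disjoint_subset.
    apply/subsetP => x Hx; rewrite inE /=.
    have [_ Hs] := Hsig i0 Hi0; exact: HIJ' (subsetP Hs x Hx).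
  + move=> k; rewrite inE disjoint_subset => /subsetP H.
    by apply/subsetP => x /H; rewrite !inE.
  + move=> k; rewrite inE -setI_eq0 => /set0Pn [i]; rewrite in_setI => /andP [Hi1 Hi2].
    have [j [Hj1 Hj2 Hj3]] := Hmx i k Hi2 Hi1.
    have -> : 2 = #|[set i; j]| by rewrite cards2 eq_sym Hj3.
    apply: subset_leq_card; apply/subsetP => x; rewrite in_set2.
    by case/orP => /eqP ->; rewrite in_setI ?Hi1 ?Hi2 ?Hj1 ?Hj2.
- move=> [I [J [K [[HI HJ HU HIJ] [HK Hin Hout]]]]].
  have [H1 H2] := doms cols_ok HK HJ HIJ Hin Hout.
  exists (I_of V K), J; split => //.
  apply/setP => x; rewrite inE in_set0; apply/negP => /andP [Hx1 Hx2].
  have : x \in I :&: J by rewrite inE (subsetP (IK_sub Hin)).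
  by rewrite HIJ inE.
- move=> [I [J [K [[HI HJ HU HIJ] [HK Hin Hout]]]]].
  exists K; split => //.
    have [j0 Hj0] := set0Pn _ HJ; have [k Hk] := rows_ok j0.
    apply/negP => /eqP HT.
    have : j0 \in I :&: J.
      by rewrite inE Hj0 (subsetP (Hin k _)) ?HT ?inE // suppE.
    by rewrite HIJ inE.
  move=> k Hk; apply: (leq_trans (Hout k Hk)); apply: subset_leq_card.
  apply/subsetP => x; rewrite in_setI in_setD => /andP [Hx1 Hx2]; rewrite Hx1 andbT.
  apply/negP => /(subsetP (IK_sub Hin)) HxI.
  have : x \in I :&: J by rewrite inE HxI.
  by rewrite HIJ inE.
- move=> [K [HK HT Hout]].
  exists (I_of V K), (~: I_of V K), K; split; split => //.
  + exact: IK_nz.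
  + exact: moreover.
  + by apply/setP => x; rewrite !inE; case: (x \in I_of V K).
  + by apply/setP => x; rewrite !inE; case: (x \in I_of V K).
  + by move=> k Hk; by apply/subsetP => x Hx; apply/bigcupP; exists k.
  + by move=> k Hk; rewrite -setDE; exact: Hout.
- move=> K HK HT Hout.
  apply: (@doms _ _ _ V cols_ok (I_of V K) _ K HK (moreover K HK HT Hout)).
  + by apply/setP => x; rewrite !inE; case: (x \in I_of V K).
  + by move=> k Hk; by apply/subsetP => x Hx; apply/bigcupP; exists k.
  + by move=> k Hk; rewrite -setDE; exact: Hout.
Qed.
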